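(* Consider the waning-immunity model described in the context. There exists $\delta_o>0$ (depending on the other parameters) such that for all $0\le\delta\le\delta_o$: if $(\omega_n+\mu)(\mu+r)>\beta_0\omega_n+\beta_n\mu$, then the system has no realistic endemic equilibrium (i.e. no equilibrium with $I^*\in(0,1]$); and if $(\omega_n+\mu)(\mu+r)<\beta_0\omega_n+\beta_n\mu$, then the system has exactly one endemic equilibrium with $I^*\in(0,1]$.
   Context: Model: Fix an integer $n\ge 1$ and parameters $\delta\ge 0$ (rate of waning immunity), $\omega\ge 0$ (vaccination rate), $r>0$ (recovery rate), $\mu>0$ (birth = death rate), coverages $p_0=0$, $p_1,\dots,p_n\in[0,1]$, and transmission rates $0\le\beta_0\le\beta_1\le\dots\le\beta_n$ with $\beta_0<\beta_n$. Write $\omega_i=p_i\omega$, $\delta_i=(1-p_i)\delta$ (so $\delta_0=\delta$). The ODE system for $(S_0,\dots,S_n,I)$ is $$S_0'=\sum_{i=1}^n\omega_iS_i-\delta S_0+rI-\beta_0IS_0-\mu S_0,$$ $$S_i'=-\omega_iS_i+\delta_{i-1}S_{i-1}-\delta_iS_i-\beta_iIS_i-\mu S_i\quad(1\le i\le n-1),$$ $$S_n'=\mu-\omega_nS_n+\delta_{n-1}S_{n-1}-\beta_nIS_n-\mu S_n,$$ $$I'=I\sum_{i=0}^n\beta_iS_i-rI-\mu I,$$ with the normalization $\sum_iS_i+I=1$. An endemic equilibrium is an equilibrium $(S_0^*,\dots,S_n^*,I^* )$ of this system satisfying the normalization with $I^*\neq0$. *)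

(* Defs.v *)
From HB Require Import structures.
From mathcomp Require Import all_boot all_order all_algebra.
From mathcomp Require Import reals.
Set Implicit Arguments. Unset Strict Implicit. Unset Printing Implicit Defensive.
Import Order.TTheory GRing.Theory Num.Theory.
Local Open Scope ring_scope.

(* Compartments S_0..S_n are the values S 0 .. S n (S : nat -> R; values
   at indices > n are irrelevant).  omega_i = p_i * omega,
   delta_i = (1 - p_i) * delta. *)
Definition equilibrium (R : realType) (n : nat) (delta omega r mu : R)
    (p beta : nat -> R) (S : nat -> R) (I : R) : Prop :=
  let om i := p i * omega in
  let de i := (1 - p i) * delta in
  [/\ \sum_(1 <= i < n.+1) om i * S i - delta * S 0%N + r * I
        - beta 0%N * I * S 0%N - mu * S 0%N = 0,
      (forall i : nat, (1 <= i < n)%N ->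
        - om i * S i + de i.-1 * S i.-1 - de i * S i
        - beta i * I * S i - mu * S i = 0),
      mu - om n * S n + de n.-1 * S n.-1 - beta n * I * S n - mu * S n = 0,
      I * (\sum_(0 <= i < n.+1) beta i * S i) - r * I - mu * I = 0
    & \sum_(0 <= i < n.+1) S i + I = 1 ].

Definition endemic_equilibrium (R : realType) (n : nat) (delta omega r mu : R)
    (p beta : nat -> R) (S : nat -> R) (I : R) : Prop :=
  equilibrium n delta omega r mu p beta S I /\ I != 0.

(* Main.v *)
Require Import Defs.
From HB Require Import structures.
From mathcomp Require Import all_boot all_order all_algebra.
From mathcomp Require Import reals.
From mathcomp Require Import all_classical all_reals all_analysis.
From mathcomp Require Import lra ring.
Import Order.TTheory GRing.Theory Num.Theory.
Import numFieldNormedType.Exports.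
Local Open Scope ring_scope.
Set Implicit Arguments. Unset Strict Implicit.

Lemma lip_cont (R : realType) (f : R -> R) (L : R) : 0 < L ->
  (forall x y, `|f x - f y| <= L * `|x - y|) -> continuous f.
Proof.
move=> L0 H x; apply/cvgrPdist_lt => e e0.
near=> y.
rewrite (le_lt_trans (H _ _)) // -ltr_pdivlMl //.
near: y.
apply/nbhs_normP; exists (L^-1*e) => /=; [by rewrite mulr_gt0 ?invr_gt0 | by move=> y].
Unshelve. all: by end_near.
Qed.

Definition clamp (R : realType) (x : R) := Order.min 1 (Order.max 0 x).

Lemma clamp_cases (R : realType) (x : R) :
  (x <= 0 /\ clamp x = 0) \/ (0 <= x <= 1 /\ clamp x = x) \/ (1 <= x /\ clamp x = 1).
Proof.
rewrite /clamp; case: (boolP (x <= 0)) => h0.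
  by left; rewrite max_l // min_r // ler01.
rewrite -ltNge in h0.
right; case: (boolP (x <= 1)) => h1.
  by left; rewrite max_r ?ltW // min_r // (ltW h0).
rewrite -ltNge in h1.
by right; rewrite max_r ?ltW // min_l ?ltW // (ltW h1).
Qed.

Lemma clamp_in (R : realType) (x : R) : 0 <= clamp x <= 1.
Proof. case: (clamp_cases x) => [[h ->]|[[h ->]|[h ->]]] //; rewrite ?lexx ?ler01 //. Qed.

Lemma clamp_id (R : realType) (x : R) : 0 <= x <= 1 -> clamp x = x.
Proof. by move=> /andP[h1 h2]; rewrite /clamp max_r // min_r. Qed.

Lemma clamp_lip (R : realType) (x y : R) : `|clamp x - clamp y| <= `|x - y|.
Proof.
have h1 := ler_norm (x - y); have h2 := ler_norm (y - x); rewrite distrC in h2.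
rewrite ler_norml.
case: (clamp_cases x) => [[hx ->]|[[/andP [hx hx'] ->]|[hx ->]]];
case: (clamp_cases y) => [[hy ->]|[[/andP [hy hy'] ->]|[hy ->]]]; lra.
Qed.

Section BLsec.
Variable R : realType.

Definition BL (K : R) (f : R -> R) :=
  forall a b, 0 <= a <= 1 -> 0 <= b <= 1 ->
    `|f a| <= K /\ `|f a - f b| <= K * `|a - b|.

Lemma BL_ext K f g : (forall x, f x = g x) -> BL K f -> BL K g.
Proof. by move=> e H a b ha hb; rewrite -!e; apply: H. Qed.

Lemma BL_K0 K f : BL K f -> 0 <= K.
Proof.
move=> /(_ 0 0); rewrite lexx ler01 => /(_ isT isT) [h _].
exact: le_trans h.
Qed.

Lemma BL_W K K' f : K <= K' -> BL K f -> BL K' f.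
Proof.
move=> kk H a b ha hb; have [h1 h2] := H a b ha hb; split; first exact: le_trans kk.
apply: (le_trans h2); apply: ler_wpM2r => //.
Qed.

Lemma BL_const K k : `|k| <= K -> BL K (fun _ => k).
Proof.
move=> hk a b _ _; split => //; rewrite subrr normr0 mulr_ge0 //.
exact: le_trans hk.
Qed.

Lemma BL_id : BL 1 (fun x => x).
Proof.
move=> a b ha hb; rewrite mul1r; split => //.
by rewrite ger0_norm; lra.
Qed.

Lemma BL_add K1 K2 f g : BL K1 f -> BL K2 g -> BL (K1 + K2) (fun x => f x + g x).
Proof.
move=> Hf Hg a b ha hb; have [f1 f2] := Hf a b ha hb; have [g1 g2] := Hg a b ha hb.
split; first by rewrite (le_trans (ler_normD _ _)) // lerD.
have -> : f a + g a - (f b + g b) = (f a - f b) + (g a - g b) by ring.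
by rewrite (le_trans (ler_normD _ _)) // mulrDl lerD.
Qed.

Lemma BL_opp K f : BL K f -> BL K (fun x => - f x).
Proof.
move=> Hf a b ha hb; have [f1 f2] := Hf a b ha hb.
by rewrite normrN -opprD normrN.
Qed.

Lemma BL_sub K1 K2 f g : BL K1 f -> BL K2 g -> BL (K1 + K2) (fun x => f x - g x).
Proof. by move=> Hf Hg; apply: BL_add => //; apply: BL_opp. Qed.

Lemma BL_mul K1 K2 f g : BL K1 f -> BL K2 g -> BL (2 * K1 * K2) (fun x => f x * g x).
Proof.
move=> Hf Hg a b ha hb; have [f1 f2] := Hf a b ha hb; have [g1 g2] := Hg a b ha hb.
have [g1' _] := Hg b a hb ha.
have K10 := BL_K0 Hf; have K20 := BL_K0 Hg.
have n1 := normr_ge0 (f a); have n2 := normr_ge0 (g a); have n3 := normr_ge0 (g b).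
have n4 := normr_ge0 (a - b).
split.
  rewrite normrM; have : `|f a| * `|g a| <= K1 * K2 by rewrite ler_pM.
  nra.
have -> : f a * g a - f b * g b = f a * (g a - g b) + g b * (f a - f b) by ring.
rewrite (le_trans (ler_normD _ _)) // !normrM.
have h1 : `|f a| * `|g a - g b| <= K1 * (K2 * `|a - b|) by rewrite ler_pM.
have h2 : `|g b| * `|f a - f b| <= K2 * (K1 * `|a - b|) by rewrite ler_pM.
nra.
Qed.

Lemma BL_inv (m L : R) f : 0 < m -> (forall a, 0 <= a <= 1 -> m <= f a) ->
  (forall a b, 0 <= a <= 1 -> 0 <= b <= 1 -> `|f a - f b| <= L * `|a - b|) ->
  BL (m^-1 + L / m ^+ 2) (fun x => (f x)^-1).
Proof.
move=> m0 fm fL a b ha hb.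
have fa := fm a ha; have fb := fm b hb.
have fa0 : 0 < f a by apply: (Order.POrderTheory.lt_le_trans m0 fa).
have fb0 : 0 < f b by apply: (Order.POrderTheory.lt_le_trans m0 fb).
have L0 : 0 <= L.
  have := fL 0 1; rewrite !lexx ler01 sub0r normrN normr1 mulr1 => /(_ isT isT).
  exact: le_trans.
have iab : (f a)^-1 <= m^-1 by rewrite lef_pV2 ?posrE.
split.
  rewrite ger0_norm; last by rewrite invr_ge0 ltW.
  by apply: (le_trans iab); rewrite lerDl divr_ge0 // exprn_ge0 // ltW.
have -> : (f a)^-1 - (f b)^-1 = (f b - f a) / (f a * f b).
  by field; rewrite ?gt_eqF.
rewrite normrM [`|f b - f a|]distrC [`|(f a * f b)^-1|]ger0_norm; last first.
  by rewrite invr_ge0 mulr_ge0 // ltW.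
have hm : (f a * f b)^-1 <= (m ^+ 2)^-1.
  rewrite lef_pV2 ?posrE ?mulr_gt0 ?exprn_gt0 // expr2 ler_pM // ltW //.
have n4 := normr_ge0 (a - b).
have h1 : `|f a - f b| * (f a * f b)^-1 <= (L * `|a - b|) * (m ^+ 2)^-1.
  apply: ler_pM => //; rewrite ?invr_ge0 ?mulr_ge0 //. all: try exact: ltW. exact: fL.
apply: (le_trans h1).
have : 0 <= m^-1 * `|a - b| by rewrite mulr_ge0 // invr_ge0 ltW.
rewrite mulrDl; nra.
Qed.

Lemma BL_sum K (F : nat -> R -> R) a b :
  (forall i, (a <= i < b)%N -> BL K (F i)) ->
  BL ((b - a)%:R * K) (fun x => \sum_(a <= i < b) F i x).
Proof.
elim: b => [|b IH] H.
  apply: (@BL_ext _ (fun _ => 0)) => [x|]; first by rewrite big_geq.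
  by apply: BL_const; rewrite normr0 sub0n mul0r.
case: (leqP a b) => ab; last first.
  apply: (@BL_ext _ (fun _ => 0)) => [x|]; first by rewrite big_geq // ltnW.
  have -> : (b.+1 - a)%N = 0%N by apply/eqP; rewrite subn_eq0.
  by apply: BL_const; rewrite normr0 mul0r.
rewrite subSn // -addn1 natrD mulrDl mul1r.
apply: (@BL_ext _ (fun x => \sum_(a <= i < b) F i x + F b x)).
  by move=> x; rewrite big_nat_recr.
apply: BL_add; first by apply: IH => i /andP[h1 h2]; apply: H; rewrite h1 ltnS ltnW.
by apply: H; rewrite ab leqnn.
Qed.

End BLsec.

Lemma subr_ge0_w (R : realType) (x y : R) : x <= y -> 0 <= y - x.
Proof. by rewrite subr_ge0. Qed.

Lemma subr_gt0_w (R : realType) (x y : R) : x < y -> 0 < y - x.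
Proof. by rewrite subr_gt0. Qed.
Lemma subr_gt0_w' (R : realType) (x y : R) : x < y -> 0 < y - x.
Proof. by rewrite subr_gt0. Qed.

Section Model.
Variables (R : realType) (n : nat) (omega r mu : R) (p beta : nat -> R).
Hypotheses (n1 : (1 <= n)%N) (om0 : 0 <= omega) (r0 : 0 < r) (mu0 : 0 < mu)
  (p0 : p 0%N = 0) (pb : forall i : nat, (1 <= i <= n)%N -> 0 <= p i <= 1)
  (b0 : 0 <= beta 0%N) (bm : forall i : nat, (i < n)%N -> beta i <= beta i.+1)
  (bn : beta 0%N < beta n).

Definition om i := p i * omega.
Definition de (d : R) i := (1 - p i) * d.
Definition D d (I : R) i := om i + de d i + beta i * I + mu.
Definition Dn (I : R) := om n + beta n * I + mu.
Fixpoint c d I k := match k with 0%N => 1 | k.+1 => de d k * c d I k / D d I k.+1 end.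
Definition t d I := de d n.-1 * c d I n.-1 / Dn I.
Definition E d I := \sum_(1 <= i < n) c d I i + t d I.
Definition F d I := \sum_(1 <= i < n) beta i * c d I i + beta n * t d I.
Definition u I := mu / Dn I.
Definition h0 I := (1 - I - u I) * beta 0%N - (r + mu - beta n * u I).
Definition hd d I := (1 - I - u I) * F d I - (r + mu - beta n * u I) * E d I.
Definition h d I := (1 - I - u I) * (beta 0%N + F d I) - (r + mu - beta n * u I) * (1 + E d I).

Lemma hE d I : h d I = h0 I + hd d I.
Proof. by rewrite /h /h0 /hd; ring. Qed.

Lemma beta_mono i j : (i <= j <= n)%N -> beta i <= beta j.
Proof.
elim: j => [|j IH] /andP[ij jn]; first by move: ij; rewrite leqn0 => /eqP ->.
case: (ltngtP i j.+1) ij => // [ij _|-> _]; last by [].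
apply: (le_trans (IH _)); first by rewrite -ltnS ij ltnW.
exact: bm.
Qed.

Lemma beta_ge0 i : (i <= n)%N -> 0 <= beta i.
Proof. by move=> hi; apply: (le_trans b0); apply: beta_mono; rewrite hi. Qed.

Lemma beta_le i : (i <= n)%N -> beta i <= beta n.
Proof. by move=> hi; apply: beta_mono; rewrite hi leqnn. Qed.

Lemma bn0 : 0 < beta n.
Proof. exact: le_lt_trans b0 bn. Qed.

Lemma p_bd i : (i <= n)%N -> 0 <= p i <= 1.
Proof. by case: i => [|i] hi; [rewrite p0 lexx ler01 | apply: pb]. Qed.

Lemma om_ge0 i : (i <= n)%N -> 0 <= om i.
Proof. by move=> /p_bd /andP[h _]; rewrite mulr_ge0. Qed.

Lemma de_ge0 d i : 0 <= d -> (i <= n)%N -> 0 <= de d i.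
Proof. by move=> d0 /p_bd /andP[_ h]; rewrite mulr_ge0 // subr_ge0. Qed.

Lemma de_le d i : 0 <= d -> (i <= n)%N -> de d i <= d.
Proof. move=> d0 /p_bd /andP[h1 h2]; rewrite /de; nra. Qed.

Lemma D_ge d I i : 0 <= d -> 0 <= I -> (i <= n)%N -> mu <= D d I i.
Proof.
move=> d0 I0 hi; rewrite /D.
have := om_ge0 hi; have := de_ge0 d0 hi; have := mulr_ge0 (beta_ge0 hi) I0; lra.
Qed.

Lemma Dn_ge I : 0 <= I -> mu <= Dn I.
Proof.
move=> I0; rewrite /Dn.
have := om_ge0 (leqnn n); have := mulr_ge0 (beta_ge0 (leqnn n)) I0; lra.
Qed.

Definition R0 := mu^-1 + beta n / mu ^+ 2.

Lemma R0_ge0 : 0 <= R0.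
Proof. by rewrite addr_ge0 // ?invr_ge0 ?divr_ge0 ?exprn_ge0 // ltW // bn0. Qed.

Lemma lipb i a b : (i <= n)%N -> `|beta i * a - beta i * b| <= beta n * `|a - b|.
Proof.
move=> hi; rewrite -mulrBr normrM ger0_norm ?beta_ge0 //.
by rewrite ler_wpM2r // beta_le.
Qed.

Lemma invD_BL d i : 0 <= d -> (i <= n)%N -> BL R0 (fun x => (D d x i)^-1).
Proof.
move=> d0 hi; apply: BL_inv => //.
  by move=> a /andP[a0 _]; apply: D_ge.
move=> a b _ _; rewrite /D.
have -> : om i + de d i + beta i * a + mu - (om i + de d i + beta i * b + mu) =
  beta i * a - beta i * b by ring.
exact: lipb.
Qed.

Lemma invDn_BL : BL R0 (fun x => (Dn x)^-1).
Proof.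
apply: BL_inv => //.
  by move=> a /andP[a0 _]; apply: Dn_ge.
move=> a b _ _; rewrite /Dn.
have -> : om n + beta n * a + mu - (om n + beta n * b + mu) =
  beta n * a - beta n * b by ring.
exact: lipb.
Qed.

Lemma de_BL d i : 0 <= d -> (i <= n)%N -> BL d (fun _ => de d i).
Proof.
by move=> d0 hi; apply: BL_const; rewrite ger0_norm ?de_ge0 ?de_le.
Qed.

Lemma c_step d k K : 0 <= d -> (k < n)%N -> BL K (fun x => c d x k) ->
  BL (2 * (2 * d * K) * R0) (fun x => c d x k.+1).
Proof.
move=> d0 kn H.
apply: (@BL_ext _ _ (fun x => de d k * c d x k * (D d x k.+1)^-1)) => //.
apply: BL_mul; last exact: invD_BL.
by apply: BL_mul => //; apply: de_BL => //; apply: ltnW.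
Qed.

Lemma c_BL d k : 0 <= d <= 1 -> (k < n)%N -> BL ((4 * R0) ^+ k) (fun x => c d x k).
Proof.
move=> /andP[d0 d1]; elim: k => [|k IH] hk.
  by apply: BL_const; rewrite normr1 expr0.
have := c_step d0 (ltnW hk) (IH (ltnW hk)); apply: BL_W.
have e0 : 0 <= (4 * R0) ^+ k by rewrite exprn_ge0 // mulr_ge0 // R0_ge0.
have := mulr_ge0 (mulr_ge0 e0 R0_ge0) (subr_ge0_w d1).
rewrite exprSr; nra.
Qed.

Lemma c_BLd d k : 0 <= d <= 1 -> (1 <= k < n)%N ->
  BL (d * (4 * R0) ^+ k) (fun x => c d x k).
Proof.
move=> hd; have /andP[d0 d1] := hd; case: k => // k /andP[_ hk].
have := c_step d0 (ltnW hk) (c_BL hd (ltnW hk)); apply: BL_W.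
by rewrite exprSr le_eqVlt; apply/orP; left; apply/eqP; ring.
Qed.

Lemma t_BL d : 0 <= d <= 1 -> BL (d * (4 * R0) ^+ n) (t d).
Proof.
move=> hd; have /andP[d0 d1] := hd.
have hn : (n.-1 < n)%N by rewrite prednK.
apply: (@BL_ext _ _ (fun x => de d n.-1 * c d x n.-1 * (Dn x)^-1)) => //.
have := BL_mul (BL_mul (de_BL d0 (ltnW hn)) (c_BL hd hn)) invDn_BL.
apply: BL_W.
have e : (4 * R0) ^+ n = (4 * R0) ^+ n.-1 * (4 * R0) by rewrite -exprSr prednK.
by rewrite e le_eqVlt; apply/orP; left; apply/eqP; ring.
Qed.

Definition Q := (1 + 4 * R0) ^+ n.

Lemma powQ k : (k <= n)%N -> (4 * R0) ^+ k <= Q.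
Proof.
move=> kn; have h : 0 <= 4 * R0 by rewrite mulr_ge0 // R0_ge0.
apply: (@le_trans _ _ ((1 + 4 * R0) ^+ k)).
  by rewrite lerXn2r ?nnegrE ?addr_ge0 // lerDr.
by apply: ler_weXn2l => //; rewrite lerDl.
Qed.

Lemma E_BL d : 0 <= d <= 1 -> BL (d * ((n - 1)%:R * Q + Q)) (E d).
Proof.
move=> hd; have /andP[d0 d1] := hd.
apply: (@BL_ext _ _ (fun x => \sum_(1 <= i < n) c d x i + t d x)) => //.
rewrite mulrDr mulrCA; apply: BL_add.
  apply: BL_sum => i hi; apply: BL_W (c_BLd hd hi).
  by rewrite ler_wpM2l // powQ // ltnW //; case/andP: hi.
by apply: BL_W (t_BL hd); rewrite ler_wpM2l // powQ.
Qed.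

Lemma F_BL d : 0 <= d <= 1 ->
  BL (d * ((n - 1)%:R * (2 * beta n * Q) + 2 * beta n * Q)) (F d).
Proof.
move=> hd; have /andP[d0 d1] := hd.
have bnn := ltW bn0.
apply: (@BL_ext _ _ (fun x => \sum_(1 <= i < n) beta i * c d x i + beta n * t d x)) => //.
rewrite mulrDr mulrCA; apply: BL_add.
  apply: BL_sum => i hi.
  have hin : (i <= n)%N by case/andP: hi => _ /ltnW.
  have := BL_mul (@BL_const _ (beta n) (beta i) _) (c_BLd hd hi).
  rewrite ger0_norm ?beta_ge0 ?beta_le // => /(_ isT); apply: BL_W.
  have := powQ (ltnW (proj2 (andP hi))) .
  move=> hq; have e0 : 0 <= (4 * R0) ^+ i by rewrite exprn_ge0 // mulr_ge0 // R0_ge0.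
  have := mulr_ge0 (mulr_ge0 d0 bnn) (subr_ge0_w hq); nra.
have := BL_mul (@BL_const _ (beta n) (beta n) _) (t_BL hd).
rewrite ger0_norm // => /(_ (lexx _)); apply: BL_W.
have := powQ (leqnn n).
move=> hq; have := mulr_ge0 (mulr_ge0 d0 bnn) (subr_ge0_w hq); nra.
Qed.


Lemma u_BL : BL (2 * mu * R0) u.
Proof.
apply: (@BL_ext _ _ (fun x => mu * (Dn x)^-1)) => //.
apply: BL_mul invDn_BL; apply: BL_const; rewrite ger0_norm // ltW //.
Qed.

Definition G1 := 1 + 1 + 2 * mu * R0.
Lemma g1_BL : BL G1 (fun x => 1 - x - u x).
Proof.
apply: BL_sub; last exact: u_BL.
apply: BL_sub; last exact: BL_id.
by apply: BL_const; rewrite normr1.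
Qed.

Definition G2 := r + mu + 2 * beta n * (2 * mu * R0).
Lemma g2_BL : BL G2 (fun x => r + mu - beta n * u x).
Proof.
apply: BL_sub.
  by apply: BL_const; rewrite ger0_norm //; apply: addr_ge0; apply: ltW.
by apply: BL_mul u_BL; apply: BL_const; rewrite ger0_norm // (ltW bn0).
Qed.

Definition KE := (n - 1)%:R * Q + Q.
Definition KF := (n - 1)%:R * (2 * beta n * Q) + 2 * beta n * Q.
Definition M := 2 * G1 * KF + 2 * G2 * KE.

Lemma hd_BL d : 0 <= d <= 1 -> BL (d * M) (hd d).
Proof.
move=> hdd.
apply: (@BL_ext _ _ (fun x => (1 - x - u x) * F d x - (r + mu - beta n * u x) * E d x)) => //.
have := BL_sub (BL_mul g1_BL (F_BL hdd)) (BL_mul g2_BL (E_BL hdd)).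
by apply: BL_W; rewrite le_eqVlt; apply/orP; left; apply/eqP; rewrite /M /KF /KE; ring.
Qed.

Definition K0 := 2 * G1 * beta 0%N + G2.
Lemma h0_BL : BL K0 h0.
Proof.
apply: (@BL_ext _ _ (fun x => (1 - x - u x) * beta 0%N - (r + mu - beta n * u x))) => //.
apply: BL_sub; last exact: g2_BL.
apply: BL_mul; first exact: g1_BL.
by apply: BL_const; rewrite ger0_norm.
Qed.

Lemma h_BL d : 0 <= d <= 1 -> BL (K0 + d * M) (h d).
Proof.
move=> hdd; apply: (@BL_ext _ _ (fun x => h0 x + hd d x)); first by move=> x; rewrite hE.
exact: BL_add h0_BL (hd_BL hdd).
Qed.

Definition kappa := (beta n - beta 0%N) * mu * beta n / (Dn 1) ^+ 2.

Lemma kappa_gt0 : 0 < kappa.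
Proof.
have := Dn_ge ler01; move=> hD.
by rewrite /kappa divr_gt0 ?exprn_gt0 ?mulr_gt0 ?subr_gt0 ?bn0 //; apply: lt_le_trans hD.
Qed.

Lemma h0_dec a b : 0 <= a -> a <= b -> b <= 1 -> h0 b - h0 a <= - kappa * (b - a).
Proof.
move=> a0 ab b1.
have b0' : 0 <= b by apply: le_trans ab.
have hX := Dn_ge a0; have hY := Dn_ge b0'.
have X0 : 0 < Dn a by apply: lt_le_trans hX.
have Y0 : 0 < Dn b by apply: lt_le_trans hY.
have bnn := bn0.
have XY : Dn a <= Dn b by rewrite /Dn lerD2r lerD2l ler_wpM2l // ltW.
have YZ : Dn b <= Dn 1 by rewrite /Dn lerD2r lerD2l ler_wpM2l // ltW.
have key : u b - u a = - (mu * beta n * (b - a)) * (Dn a * Dn b)^-1.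
  rewrite /u.
  have -> : mu * beta n * (b - a) = mu * (Dn b - Dn a) by rewrite /Dn; ring.
  by field; rewrite ?gt_eqF.
have -> : h0 b - h0 a = - (b - a) * beta 0%N + (beta n - beta 0%N) * (u b - u a).
  by rewrite /h0; ring.
rewrite key /kappa.
have W0 : 0 <= (beta n - beta 0%N) * (mu * beta n * (b - a)).
  by rewrite !mulr_ge0 ?subr_ge0 // ltW.
have hinv : ((Dn 1) ^+ 2)^-1 <= (Dn a * Dn b)^-1.
  have Z0 : 0 < Dn 1 by apply: lt_le_trans Y0 YZ.
  rewrite lef_pV2 ?posrE ?mulr_gt0 ?exprn_gt0 //.
  rewrite expr2; apply: ler_pM; [exact: ltW|exact: ltW|exact: le_trans XY YZ|exact: YZ].
have := ler_wpM2l W0 hinv.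
have := mulr_ge0 (subr_ge0_w ab) b0.
rewrite /= !mulNr !mulrN; lra.
Qed.

Lemma h0_1 : h0 1 < 0.
Proof.
have hZ := Dn_ge ler01.
have Z0 : 0 < Dn 1 by apply: lt_le_trans hZ.
have vZ : u 1 * Dn 1 = mu by rewrite /u mulfVK // gt_eqF.
have v0 : 0 < u 1 by rewrite /u divr_gt0.
have hb : beta n - beta 0%N < Dn 1.
  rewrite /Dn mulr1; have := om_ge0 (leqnn n); move: b0 mu0; lra.
have := mulr_gt0 v0 (subr_gt0_w hb).
rewrite /h0; move: r0 mu0 b0; lra.
Qed.

Lemma h0_0 : h0 0 * (om n + mu) = beta 0%N * om n + beta n * mu - (om n + mu) * (mu + r).
Proof.
have : 0 < om n + mu by have := om_ge0 (leqnn n); move: mu0; lra.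
move=> hp; rewrite /h0 /u /Dn mulr0 addr0; field; rewrite gt_eqF //.
Qed.

Lemma hd_bound d I : 0 <= d <= 1 -> 0 <= I <= 1 -> `|hd d I| <= d * M.
Proof. by move=> hdd hI; have [] := hd_BL hdd hI hI. Qed.

Lemma no_root d I : 0 <= d <= 1 -> h0 0 + d * M < 0 -> 0 <= I <= 1 -> h d I < 0.
Proof.
move=> hdd hneg hI; have /andP[I0 I1] := hI.
rewrite hE; have := hd_bound hdd hI; rewrite ler_norml => /andP[_ h2].
have := h0_dec (lexx 0) I0 I1; have := kappa_gt0.
have := mulr_ge0 (ltW kappa_gt0) I0.
lra.
Qed.

Lemma h_dec d a b : 0 <= d <= 1 -> d * M < kappa -> 0 <= a -> a < b -> b <= 1 ->
  h d b < h d a.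
Proof.
move=> hdd hk a0 ab b1.
have ha : 0 <= a <= 1 by rewrite a0 /=; apply: le_trans (ltW ab) b1.
have hb : 0 <= b <= 1 by rewrite b1 andbT; apply: le_trans (ltW ab).
have [_ H] := hd_BL hdd hb ha.
rewrite ler_norml in H; have /andP[_ H2] := H.
have eab : `|b - a| = b - a by rewrite ger0_norm // subr_ge0 ltW.
rewrite eab in H2.
have := h0_dec a0 (ltW ab) b1.
have := mulr_gt0 (subr_gt0_w' hk) (subr_gt0_w' ab).
rewrite !hE; lra.
Qed.

Lemma h_pos0 d : 0 <= d <= 1 -> 0 < h0 0 - d * M -> 0 < h d 0.
Proof.
move=> hdd hp; have h01 : 0 <= (0:R) <= 1 by rewrite lexx ler01.
have := hd_bound hdd h01; rewrite ler_norml => /andP[h1 _].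
rewrite hE; lra.
Qed.

Lemma h_neg1 d : 0 <= d <= 1 -> d * M < - h0 1 -> h d 1 < 0.
Proof.
move=> hdd hp; have h01 : 0 <= (1:R) <= 1 by rewrite lexx ler01.
have := hd_bound hdd h01; rewrite ler_norml => /andP[_ h1].
rewrite hE; lra.
Qed.


Lemma c_ge0 d I k : 0 <= d -> 0 <= I -> (k <= n)%N -> 0 <= c d I k.
Proof.
move=> d0 I0; elim: k => [|k IH] hk /=; first exact: ler01.
have hD := D_ge d0 I0 hk.
apply: divr_ge0; first by apply: mulr_ge0; [exact: de_ge0 (ltnW hk) | exact: IH (ltnW hk)].
by apply: ltW; apply: (Order.POrderTheory.lt_le_trans mu0 hD).
Qed.

Lemma t_ge0 d I : 0 <= d -> 0 <= I -> 0 <= t d I.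
Proof.
move=> d0 I0; have hD := Dn_ge I0.
have hn : (n.-1 <= n)%N by apply: leq_pred.
rewrite /t; apply: divr_ge0; first by apply: mulr_ge0; [exact: de_ge0 | exact: c_ge0].
by apply: ltW; apply: (Order.POrderTheory.lt_le_trans mu0 hD).
Qed.

Lemma E_ge0 d I : 0 <= d -> 0 <= I -> 0 <= E d I.
Proof.
move=> d0 I0; rewrite /E addr_ge0 ?t_ge0 //.
rewrite big_nat sumr_ge0 // => i /andP[_ hi]; apply: c_ge0 => //; exact: ltnW.
Qed.

Definition build d I x i := if (i < n)%N then c d I i * x else u I + t d I * x.
Definition xx d I := (1 - I - u I) / (1 + E d I).

Lemma sums d I x S : (forall i, (i < n)%N -> S i = c d I i * x) ->
  S n = u I + t d I * x ->
  \sum_(0 <= i < n.+1) S i = x * (1 + E d I) + u I /\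
  \sum_(0 <= i < n.+1) beta i * S i = x * (beta 0%N + F d I) + beta n * u I.
Proof.
move=> hc hn.
rewrite !big_nat_recr //= !(big_ltn n1) hn (hc 0%N n1) /=.
rewrite (@eq_big_nat _ _ _ 1 n (fun i => S i) (fun i => c d I i * x)); last first.
  by move=> i /andP[_ hi]; apply: hc.
rewrite (@eq_big_nat _ _ _ 1 n (fun i => beta i * S i) (fun i => beta i * c d I i * x)); last first.
  by move=> i /andP[_ hi]; rewrite hc // mulrA.
rewrite -!mulr_suml /E /F; split; ring.
Qed.

Lemma telesc (g : nat -> R) : \sum_(1 <= i < n) (g i.-1 - g i) = g 0%N - g n.-1.
Proof.
rewrite (@telescope_sumr_eq _ 1 n (fun k => - g k.-1)) //=.
  by ring.
by move=> k _ /=; ring.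
Qed.

Lemma sum_identity d S I :
  (\sum_(1 <= i < n.+1) om i * S i - d * S 0%N + r * I
        - beta 0%N * I * S 0%N - mu * S 0%N)
  + \sum_(1 <= i < n) (- om i * S i + de d i.-1 * S i.-1 - de d i * S i
        - beta i * I * S i - mu * S i)
  + (mu - om n * S n + de d n.-1 * S n.-1 - beta n * I * S n - mu * S n)
  + (I * (\sum_(0 <= i < n.+1) beta i * S i) - r * I - mu * I)
  = mu - mu * (\sum_(0 <= i < n.+1) S i + I).
Proof.
rewrite (@eq_big_nat _ _ _ 1 n _ (fun i => (de d i.-1 * S i.-1 - de d i * S i)
   + (- (om i * S i) - I * (beta i * S i) - mu * S i))); last first.
  by move=> i _; ring.
rewrite big_split /= telesc !sumrB sumrN -!mulr_sumr.
rewrite !big_nat_recr //= !(big_ltn n1) /=.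
have -> : de d 0%N = d by rewrite /de p0 subr0 mul1r.
ring.
Qed.


Lemma E1_gt0 d I : 0 <= d -> 0 <= I -> 0 < 1 + E d I.
Proof. move=> d0 I0; have := E_ge0 d0 I0; lra. Qed.

Lemma Dpos d I i : 0 <= d -> 0 <= I -> (i <= n)%N -> 0 < D d I i.
Proof. move=> d0 I0 hi; have := D_ge d0 I0 hi; move: mu0; lra. Qed.

Lemma Dnpos I : 0 <= I -> 0 < Dn I.
Proof. move=> I0; have := Dn_ge I0; move: mu0; lra. Qed.

Lemma eq_to_root d S I : 0 <= d -> 0 < I ->
  endemic_equilibrium n d omega r mu p beta S I ->
  h d I = 0 /\ S 0%N = xx d I /\
  (forall i, (i <= n)%N -> S i = build d I (S 0%N) i).
Proof.
move=> d0 I0 [[e0 emid en eI eN] Ine0].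
have I0' := ltW I0.
have hc : forall i, (i < n)%N -> S i = c d I i * S 0%N.
  elim=> [|i IH] hi /=; first by rewrite mul1r.
  have := emid i.+1; rewrite hi andbT => /(_ isT) /= ei.
  have Dp := Dpos d0 I0' (ltnW hi).
  have H : S i.+1 * D d I i.+1 = de d i * S i by rewrite /D /om /de; lra.
  apply: (mulIf (lt0r_neq0 Dp)); rewrite H IH ?(ltnW hi) //; field; rewrite gt_eqF //.
have hn1 : (n.-1 < n)%N by rewrite prednK.
have hn : S n = u I + t d I * S 0%N.
  have Dp := Dnpos I0'.
  have H : S n * Dn I = mu + de d n.-1 * S n.-1 by move: en => /=; rewrite /Dn /om /de; lra.
  apply: (mulIf (lt0r_neq0 Dp)); rewrite H hc // /u /t; field; rewrite gt_eqF //.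
have [s1 s2] := sums hc hn.
have E1 := E1_gt0 d0 I0'.
have sb : \sum_(0 <= i < n.+1) beta i * S i = r + mu.
  by apply: (mulfI Ine0); move: eI => /=; lra.
have eN' : \sum_(0 <= i < n.+1) S i + I = 1 by exact: eN.
rewrite s1 in eN'; rewrite s2 in sb.
have x1 : S 0%N = xx d I.
  by rewrite /xx; apply: (mulIf (lt0r_neq0 E1)); rewrite divfK ?gt_eqF //; lra.
split; last split => //.
  have e1 : 1 - I - u I = S 0%N * (1 + E d I) by lra.
  have e2 : r + mu - beta n * u I = S 0%N * (beta 0%N + F d I) by lra.
  by rewrite /h e1 e2; ring.
move=> i hi; rewrite /build; case: ltnP => hin; first exact: hc.
by have -> : i = n by apply/eqP; rewrite eqn_leq hi hin.
Qed.

Lemma root_to_eq d I : 0 <= d -> 0 < I -> h d I = 0 ->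
  endemic_equilibrium n d omega r mu p beta (build d I (xx d I)) I.
Proof.
move=> d0 I0 hh; have I0' := ltW I0.
set x := xx d I; set S := build d I x.
have hc : forall i, (i < n)%N -> S i = c d I i * x by move=> i hi; rewrite /S /build hi.
have hn : S n = u I + t d I * x by rewrite /S /build ltnn.
have [s1 s2] := sums hc hn.
have E1 := E1_gt0 d0 I0'.
have ex : x * (1 + E d I) = 1 - I - u I by rewrite /x /xx divfK // gt_eqF.
have ey : x * (beta 0%N + F d I) = r + mu - beta n * u I.
  apply: (mulIf (lt0r_neq0 E1)); rewrite -mulrA [(_ + F d I) * _]mulrC mulrA ex.
  by move: hh; rewrite /h; lra.
have eqN : \sum_(0 <= i < n.+1) S i + I = 1 by rewrite s1; lra.
have eqI : I * (\sum_(0 <= i < n.+1) beta i * S i) - r * I - mu * I = 0.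
  by rewrite s2 ey; ring.
have emid : forall i : nat, (1 <= i < n)%N ->
    - om i * S i + de d i.-1 * S i.-1 - de d i * S i - beta i * I * S i - mu * S i = 0.
  case=> // i /andP[_ hi] /=; rewrite !hc ?(ltnW hi) //=.
  have Dp := Dpos d0 I0' (ltnW hi).
  move: Dp; rewrite /D => Dp; field; rewrite gt_eqF //.
have hn1 : (n.-1 < n)%N by rewrite prednK.
have en : mu - om n * S n + de d n.-1 * S n.-1 - beta n * I * S n - mu * S n = 0.
  rewrite hn hc // /u /t.
  have Dp := Dnpos I0'; move: Dp; rewrite /Dn => Dp; field; rewrite gt_eqF //.
have Z : \sum_(1 <= i < n) (- om i * S i + de d i.-1 * S i.-1 - de d i * S i
        - beta i * I * S i - mu * S i) = 0.
  by rewrite big_nat big1 // => i hi; apply: emid.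
have e0 : \sum_(1 <= i < n.+1) om i * S i - d * S 0%N + r * I
        - beta 0%N * I * S 0%N - mu * S 0%N = 0.
  have := sum_identity d S I; move: Z en eqI eqN => z1 z2 z3 z4; rewrite z1 z2 z3 z4 mulr1; lra.
split; last by rewrite gt_eqF.
by split.
Qed.


Lemma exists_root d : 0 <= d <= 1 -> 0 < h d 0 -> h d 1 < 0 ->
  exists I, 0 < I <= 1 /\ h d I = 0.
Proof.
move=> hdd hp hn.
pose g := fun x => h d (clamp x).
have HB := h_BL hdd.
have K0M : 0 <= K0 + d * M := BL_K0 HB.
have gL : forall x y, `|g x - g y| <= (K0 + d * M + 1) * `|x - y|.
  move=> x y; have [_ H] := HB _ _ (clamp_in x) (clamp_in y).
  apply: (le_trans H); have := clamp_lip x y; have := normr_ge0 (x - y).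
  have := normr_ge0 (clamp x - clamp y); nra.
have gc : continuous g by apply: (lip_cont _ gL); lra.
have g0 : g 0 = h d 0 by rewrite /g clamp_id // lexx ler01.
have g1 : g 1 = h d 1 by rewrite /g clamp_id // lexx ler01.
have := @IVT R g 0 1 0 ler01 (continuous_subspaceT gc).
rewrite g0 g1 ge_min le_max (ltW hp) (ltW hn) orbT => /(_ isT) [x].
rewrite in_itv /= => /andP[x0 x1] gx.
have xne : x != 0 by apply/eqP => ex; move: gx; rewrite ex g0; move: hp; lra.
exists x; split; first by rewrite x1 andbT lt_neqAle eq_sym xne.
by move: gx; rewrite /g clamp_id // x0 x1.
Qed.

Lemma main_sec : exists delta_o : R, 0 < delta_o /\
    forall delta : R, 0 <= delta <= delta_o ->
      ((p n * omega + mu) * (mu + r) > beta 0%N * (p n * omega) + beta n * mu ->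
         ~ (exists (S : nat -> R) (I : R),
              endemic_equilibrium n delta omega r mu p beta S I /\ 0 < I <= 1))
      /\
      ((p n * omega + mu) * (mu + r) < beta 0%N * (p n * omega) + beta n * mu ->
         exists (S : nat -> R) (I : R),
           (endemic_equilibrium n delta omega r mu p beta S I /\ 0 < I <= 1) /\
           forall (S' : nat -> R) (I' : R),
             endemic_equilibrium n delta omega r mu p beta S' I' -> 0 < I' <= 1 ->
             I' = I /\ (forall i : nat, (i <= n)%N -> S' i = S i)).
Proof.
pose eta := Num.min kappa (Num.min (- h0 1) (if h0 0 == 0 then 1 else `|h0 0|)).
have k0 := kappa_gt0; have hh1 := h0_1.
have eta0 : 0 < eta.
  rewrite /eta !lt_min k0 oppr_gt0 hh1 /=.
  by case: eqP => [_|/eqP ne]; [exact: ltr01 | rewrite normr_gt0].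
have m1 : eta <= kappa by rewrite /eta ge_min lexx.
have m2 : eta <= - h0 1 by rewrite /eta ge_min ge_min lexx orbT.
have m3 : h0 0 != 0 -> eta <= `|h0 0|.
  by move=> /negbTE ne; rewrite /eta ge_min ge_min ne lexx !orbT.
have M1 : 0 < `|M| + 1 by have := normr_ge0 M; lra.
pose dO := Num.min 1 (eta / (2 * (`|M| + 1))).
have dO0 : 0 < dO by rewrite /dO lt_min ltr01 divr_gt0 // mulr_gt0.
exists dO; split => // d /andP[d0 ddO].
have d1 : d <= 1 by apply: le_trans ddO _; rewrite /dO ge_min lexx.
have hdd : 0 <= d <= 1 by rewrite d0 d1.
have dM : d * M < eta.
  have e1 : d <= eta / (2 * (`|M| + 1)) by apply: le_trans ddO _; rewrite /dO ge_min lexx orbT.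
  have e2 : d * (2 * (`|M| + 1)) <= eta by rewrite -ler_pdivlMr // mulr_gt0.
  have e3 : d * M <= d * (`|M| + 1) by rewrite ler_wpM2l // (le_trans (ler_norm M)) // lerDl.
  lra.
have ompos : 0 < om n + mu by have := om_ge0 (leqnn n); move: mu0; lra.
have H00 := h0_0.
split.
  move=> cond [S [I [Heq /andP[I0 I1]]]].
  have hneg : h0 0 < 0.
    have : h0 0 * (om n + mu) < 0 by rewrite H00 /om; lra.
    by rewrite pmulr_llt0.
  have hne : h0 0 != 0 by rewrite lt_eqF.
  have := m3 hne; rewrite ltr0_norm // => m3'.
  have [hz _] := eq_to_root d0 I0 Heq.
  have := no_root hdd (I := I) _ _; rewrite hz.
  have : h0 0 + d * M < 0 by lra.
  move=> hh /(_ hh); rewrite I1 ltW //= => /(_ isT); rewrite ltxx.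
  by [].
move=> cond.
have hpos : 0 < h0 0.
  have : 0 < h0 0 * (om n + mu) by rewrite H00 /om; lra.
  by rewrite pmulr_lgt0.
have := m3 (lt0r_neq0 hpos); rewrite gtr0_norm // => m3'.
have hp0 : 0 < h d 0 by apply: h_pos0 => //; lra.
have hn1 : h d 1 < 0 by apply: h_neg1 => //; lra.
have [I [/andP[I0 I1] hI]] := exists_root hdd hp0 hn1.
exists (build d I (xx d I)), I; split; first by split; [exact: root_to_eq | rewrite I0 I1].
move=> S' I' Heq' /andP[I0' I1'].
have [hz' [x' hb']] := eq_to_root d0 I0' Heq'.
have eI : I' = I.
  case: (ltgtP I' I) => // hlt.
    have := h_dec hdd (lt_le_trans dM m1) (ltW I0') hlt I1; rewrite hI hz' ltxx //.
  have := h_dec hdd (lt_le_trans dM m1) (ltW I0) hlt I1'; rewrite hI hz' ltxx //.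
split => // i hi; rewrite hb' // x' eI //.
Qed.

End Model.

Theorem theorem3 (R : realType) (n : nat) (omega r mu : R) (p beta : nat -> R) :
  (1 <= n)%N ->
  0 <= omega -> 0 < r -> 0 < mu ->
  p 0%N = 0 ->
  (forall i : nat, (1 <= i <= n)%N -> 0 <= p i <= 1) ->
  0 <= beta 0%N ->
  (forall i : nat, (i < n)%N -> beta i <= beta i.+1) ->
  beta 0%N < beta n ->
  exists delta_o : R, 0 < delta_o /\
    forall delta : R, 0 <= delta <= delta_o ->
      ((p n * omega + mu) * (mu + r) > beta 0%N * (p n * omega) + beta n * mu ->
         ~ (exists (S : nat -> R) (I : R),
              endemic_equilibrium n delta omega r mu p beta S I /\ 0 < I <= 1))
      /\
      ((p n * omega + mu) * (mu + r) < beta 0%N * (p n * omega) + beta n * mu ->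
         exists (S : nat -> R) (I : R),
           (endemic_equilibrium n delta omega r mu p beta S I /\ 0 < I <= 1) /\
           forall (S' : nat -> R) (I' : R),
             endemic_equilibrium n delta omega r mu p beta S' I' -> 0 < I' <= 1 ->
             I' = I /\ (forall i : nat, (i <= n)%N -> S' i = S i)).
Proof.
move=> n1 om0 r0 mu0 p0 pb b0 bm bn.
exact: (main_sec n1 om0 r0 mu0 p0 pb b0 bm bn).
Qed.
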